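(* Let $\mathbb{U},B\in\mathbb{R}^{n\times n}$, consider the bilinear system $z_{t+1}=\mathbb{U}z_t+u_tBz_t$, $z_t\in\mathbb{R}^n$, $u_t\in\mathbb{R}$, and fix a real number $\varepsilon\neq0$. Consider the optimization problem \[ \max\ \log\det Q\quad\text{subject to}\quad \begin{pmatrix} -Q & 0 & y & Q\mathbb{U}^\top\\ 0 & -\varepsilon Q & 0 & QB^\top\\ y^\top & 0 & -\frac{1}{\varepsilon} & 0\\ \mathbb{U}Q & BQ & 0 & -Q \end{pmatrix}\prec 0 \] in the variables $Q=Q^\top\in\mathbb{R}^{n\times n}$ and $y\in\mathbb{R}^n$, and let $(\hat Q,\hat y)$ be a solution. Then the ellipsoid $\hat{\mathscr{E}}=\{z\in\mathbb{R}^n: z^\top\hat Q^{-1}z\le1\}$ is a stabilizability ellipsoid of the bilinear system, with feedback control law $u=\hat k^\top z$, where $\hat k=\hat Q^{-1}\hat y$.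
   Context: $\prec0$ denotes negative definiteness. A stabilizability ellipsoid for the feedback $u=\hat k^\top z$ is an ellipsoid $\{z: z^\top \hat Q^{-1}z\le1\}$ inside which the closed-loop system $z_{t+1}=\mathbb{U}z_t+(\hat k^\top z_t)Bz_t$ is stabilized, with $V(z)=z^\top\hat Q^{-1}z$ a (control) Lyapunov function strictly decreasing along nonzero closed-loop states in the ellipsoid. *)

(* Defs.v *)
From HB Require Import structures.
From mathcomp Require Import all_boot all_order all_algebra.
From mathcomp Require Import all_classical all_reals all_analysis.
Set Implicit Arguments. Unset Strict Implicit. Unset Printing Implicit Defensive.
Import Order.TTheory GRing.Theory Num.Theory.
Local Open Scope ring_scope.

Definition negdef (R : realType) (m : nat) (A : 'M[R]_m) : Prop :=
  forall x : 'cV[R]_m, x != 0 -> (x^T *m A *m x) 0 0 < 0.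

Definition posdef (R : realType) (m : nat) (A : 'M[R]_m) : Prop :=
  forall x : 'cV[R]_m, x != 0 -> 0 < (x^T *m A *m x) 0 0.

(* The LMI matrix, with block sizes n, n, 1, n:
   [ -Q      0     y      Q U^T ]
   [  0   -eps Q   0      Q B^T ]
   [ y^T     0   -1/eps   0     ]
   [ U Q    B Q    0     -Q     ] *)
Definition lmi_matrix (R : realType) (n : nat) (U B : 'M[R]_n) (eps : R)
    (Q : 'M[R]_n) (y : 'cV[R]_n) : 'M[R]_((n + n) + (1 + n)) :=
  block_mx
    (block_mx (- Q) 0 0 (- (eps *: Q)))
    (block_mx y (Q *m U^T) 0 (Q *m B^T))
    (block_mx y^T 0 (U *m Q) (B *m Q))
    (block_mx (- (eps^-1)%:M) 0 0 (- Q)).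

Definition lmi_feasible (R : realType) (n : nat) (U B : 'M[R]_n) (eps : R)
    (Q : 'M[R]_n) (y : 'cV[R]_n) : Prop :=
  Q^T = Q /\ negdef (lmi_matrix U B eps Q y).

Definition closed_loop (R : realType) (n : nat) (U B : 'M[R]_n) (k z : 'cV[R]_n)
    : 'cV[R]_n :=
  U *m z + ((k^T *m z) 0 0) *: (B *m z).

Definition lyapV (R : realType) (n : nat) (Q : 'M[R]_n) (z : 'cV[R]_n) : R :=
  (z^T *m invmx Q *m z) 0 0.

Definition stabilizability_ellipsoid (R : realType) (n : nat) (U B Q : 'M[R]_n)
    (k : 'cV[R]_n) : Prop :=
  Q^T = Q /\ posdef Q /\
  forall z : 'cV[R]_n, z != 0 -> lyapV Q z <= 1 ->
    lyapV Q (closed_loop U B k z) < lyapV Q z.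

(* Main.v *)
Require Import Defs.
From HB Require Import structures.
From mathcomp Require Import all_boot all_order all_algebra.
From mathcomp Require Import all_classical all_reals all_analysis.
From mathcomp Require Import ring lra.
Import Order.TTheory GRing.Theory Num.Theory.
Local Open Scope ring_scope.

Section S.
Variable R : realType.
Lemma e00D (A B : 'M[R]_1) : (A + B) 0 0 = A 0 0 + B 0 0. Proof. by rewrite mxE. Qed.
Lemma e00N (A : 'M[R]_1) : (- A) 0 0 = - A 0 0. Proof. by rewrite mxE. Qed.
Lemma e00Z a (A : 'M[R]_1) : (a *: A) 0 0 = a * A 0 0. Proof. by rewrite mxE. Qed.
Lemma tr1 (A : 'M[R]_1) : A^T = A. Proof. by apply/matrixP=> i j; rewrite !ord1 mxE. Qed.
End S.

Lemma expand (R : realType) (n : nat) (U B : 'M[R]_n) (eps : R)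
    (Q : 'M[R]_n) (y : 'cV[R]_n) (a b d : 'cV[R]_n) (c : R) : Q^T = Q ->
  let x : 'cV_((n+n)+(1+n)) := col_mx (col_mx a b) (col_mx c%:M d) in
  (x^T *m lmi_matrix U B eps Q y *m x) 0 0 =
   - (a^T *m Q *m a) 0 0 - eps * (b^T *m Q *m b) 0 0 - eps^-1 * c^+2
   - (d^T *m Q *m d) 0 0 + 2 * c * (y^T *m a) 0 0 + 2 * (d^T *m U *m Q *m a) 0 0
   + 2 * (d^T *m B *m Q *m b) 0 0.
Proof.
move=> sQ x; rewrite /x /lmi_matrix !tr_col_mx !mul_row_block !mul_row_col.
rewrite ?mulmx0 ?mul0mx ?addr0 ?add0r.
rewrite !add_row_mx !mul_row_col !mulmxDl.
rewrite tr_scalar_mx !mulmxN !mulNmx !mul_scalar_mx -!scalemxAl !mulmxA -!scalemxAr.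
have t1 : a^T *m Q *m U^T *m d = d^T *m U *m Q *m a.
  by rewrite -[X in X = _]tr1 !trmx_mul !trmxK sQ !mulmxA.
have t2 : b^T *m Q *m B^T *m d = d^T *m B *m Q *m b.
  by rewrite -[X in X = _]tr1 !trmx_mul !trmxK sQ !mulmxA.
have t3 : a^T *m y = y^T *m a by rewrite -[X in X = _]tr1 trmx_mul trmxK.
rewrite t1 t2 t3 mul_mx_scalar -scalar_mxM -scalemxAl.
rewrite !e00D !e00N !e00Z [(_%:M) 0 0]mxE eqxx mulr1n.
lra.
Qed.

Theorem corollary1 (R : realType) (n : nat) (U B : 'M[R]_n) (eps : R)
    (Qh : 'M[R]_n) (yh : 'cV[R]_n) :
  eps != 0 ->
  lmi_feasible U B eps Qh yh ->
  (forall (Q : 'M[R]_n) (y : 'cV[R]_n),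
      lmi_feasible U B eps Q y -> ln (\det Q) <= ln (\det Qh)) ->
  stabilizability_ellipsoid U B Qh (invmx Qh *m yh).
Proof.
move=> eps0 [sQ neg] _.
set Q := Qh in sQ neg *; set y := yh in neg *.
have key a b c d := @expand R n U B eps Q y a b d c sQ.
have nz a b c d : a != 0 -> col_mx (col_mx a b) (col_mx c%:M d) != 0 :> 'cV[R]_((n+n)+(1+n)).
  by move=> an; rewrite !col_mx_eq0 negb_and; apply/orP; left; rewrite negb_and an.
have epsp : 0 < eps.
  have h := neg (col_mx (col_mx 0 0) (col_mx (1:R)%:M 0)).
  rewrite key in h.
  have /h : col_mx (col_mx 0 0) (col_mx (1:R)%:M 0) != 0 :> 'cV[R]_((n+n)+(1+n)).
    rewrite !col_mx_eq0 negb_and; apply/orP; right; rewrite negb_and; apply/orP; left.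
    by apply/eqP=> /matrixP /(_ 0 0); rewrite !mxE /= => /eqP; rewrite oner_eq0.
  rewrite ?trmx0 ?mul0mx ?mulmx0 ?mxE => h2.
  have : 0 < eps^-1 by lra.
  by rewrite invr_gt0.
have pd : posdef Q.
  move=> v vn; have := neg _ (nz v 0 0 0 vn); rewrite key.
  rewrite ?trmx0 ?mul0mx ?mulmx0 ?mxE.
  lra.
split=> //; split=> //.
have uQ : Q \in unitmx.
  rewrite unitmxE unitfE; apply/det0P => -[v vn vQ].
  have : v^T != 0 by apply: contra vn => /eqP/(congr1 trmx); rewrite trmxK trmx0 => ->.
  move=> /pd; rewrite trmxK vQ mul0mx mxE; lra.
set P := invmx Q.
have sP : P^T = P by rewrite /P trmx_inv sQ.
have g1 w : (P *m w)^T *m w = w^T *m P *m w by rewrite trmx_mul sP.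
have g2 w : (P *m w)^T *m Q *m (P *m w) = w^T *m P *m w.
  by rewrite -mulmxA mulKVmx // g1.
move=> z zn Vle; rewrite /lyapV -/P in Vle *.
set V : R := (z^T *m P *m z) 0 0 in Vle *.
set u : R := (((P *m y)^T *m z) 0 0).
set zp := closed_loop U B (P *m y) z.
set Vp : R := (zp^T *m P *m zp) 0 0.
have an : P *m z != 0.
  apply: contra zn => /eqP h; apply/eqP; by rewrite -(mulKVmx uQ z) -/P h mulmx0.
have h := neg _ (nz (P *m z) (u *: (P *m z)) (eps * u) (P *m zp) an).
rewrite key in h.
have f1 : ((P *m z)^T *m Q *m (P *m z)) 0 0 = V by rewrite g2.
have f2 : ((u *: (P *m z))^T *m Q *m (u *: (P *m z))) 0 0 = u ^+ 2 * V.
  by rewrite [(u *: _)^T]linearZ /= -!scalemxAl -scalemxAr !e00Z g2 -/V; lra.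
have f3 : (y^T *m (P *m z)) 0 0 = u.
  by rewrite /u trmx_mul sP mulmxA.
have f4 : ((P *m zp)^T *m Q *m (P *m zp)) 0 0 = Vp by rewrite g2.
have f5 : ((P *m zp)^T *m U *m Q *m (P *m z)) 0 0
        + ((P *m zp)^T *m B *m Q *m (u *: (P *m z))) 0 0 = Vp.
  rewrite -!scalemxAr e00Z -[_ *m Q *m (P *m z)]mulmxA mulKVmx //.
  rewrite -[_ *m Q *m (P *m z)]mulmxA mulKVmx //.
  rewrite /Vp -g1; set d := P *m zp; rewrite /zp /closed_loop -/u mulmxDr -scalemxAr e00D e00Z !mulmxA.

  by [].
rewrite f1 f2 f3 f4 in h.
have e : eps^-1 * (eps * u) ^+ 2 = eps * u ^+ 2.
  by field.
have hp : 0 <= eps * u ^+ 2 * (1 - V).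
  apply: mulr_ge0; [apply: mulr_ge0; [exact: ltW | exact: sqr_ge0] | by rewrite subr_ge0].
nra.
Qed.
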